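(* Let $r\ge 2$, $d\ge 2$. Let $\Delta\subset\mathbb{R}^d$ be a regular simplex with vertices $v_1,\ldots,v_{d+1}$, and let $B$ be the closed Euclidean unit ball centred at the origin. Then for all sufficiently small $\varepsilon>0$ the following holds. Let $U_1\subset v_1+\varepsilon B$ be a set of $r$ points and, for $h\in\{2,\ldots,d+1\}$, let $U_h\subset v_h+\varepsilon B$ be a set of $r-1$ points, chosen so that the coordinates of the points of $A=\bigcup_{h=1}^{d+1}U_h$ are algebraically independent (so $|A|=(r-1)(d+1)+1$), and let $M=U_1$. Then $\operatorname{conv}M\cap\operatorname{conv}(A\setminus M)=\emptyset$, $|M|=r$, and there is no proper partition $\{A_1,\ldots,A_r\}$ of $A$ for which the solution $(z,\alpha)$ of \[ z=\sum_{x\in A_j}\alpha(x)\,x \quad\text{and}\quad 1=\sum_{x\in A_j}\alpha(x)\qquad\text{for all } j\in[r] \] satisfies $\alpha(x)<0$ for all $x\in M$ and $\alpha(x)>0$ for all $x\in A\setminus M$.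
   Context: A partition $\{A_1,\ldots,A_r\}$ of $A$ into $r$ parts is called proper if $1\le |A_j|\le d+1$ for every $j$. *)

(* Defs.v *)
From HB Require Import structures.
From mathcomp Require Import all_boot all_order all_algebra.
Set Implicit Arguments. Unset Strict Implicit. Unset Printing Implicit Defensive.
Import Order.TTheory GRing.Theory Num.Theory.
Local Open Scope ring_scope.

Definition sqnorm (R : numDomainType) (d : nat) (x : 'rV[R]_d) : R :=
  \sum_(k < d) x ord0 k ^+ 2.

Definition regular_simplex (R : numDomainType) (d : nat)
    (v : 'I_d.+1 -> 'rV[R]_d) : Prop :=
  exists s : R, 0 < s /\ forall i j, i != j -> sqnorm (v i - v j) = s.

(* Algebraic independence over Q of a finite family of elements c : J -> R:
   every polynomial with rational coefficients (of degree < D in each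
   variable, for arbitrary D) vanishing at c is the zero polynomial. *)
Definition alg_indep (R : numFieldType) (J : finType) (c : J -> R) : Prop :=
  forall (D : nat) (coef : {ffun J -> 'I_D} -> rat),
    \sum_(e : {ffun J -> 'I_D}) ratr (coef e) * \prod_(j : J) c j ^+ e j = 0 ->
    forall e, coef e = 0.

Definition in_conv (R : numDomainType) (d : nat) (I : finType) (S : {set I})
    (p : I -> 'rV[R]_d) (y : 'rV[R]_d) : Prop :=
  exists lam : I -> R, (forall i, i \in S -> 0 <= lam i) /\
    \sum_(i in S) lam i = 1 /\ y = \sum_(i in S) lam i *: p i.

Definition proper_partition (I : finType) (r d : nat) (P : {set {set I}}) : Prop :=
  partition P [set: I] /\ #|P| = r /\
  forall B, B \in P -> (1 <= #|B| <= d.+1)%N.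

(* index type of the points of A: inl i (i < r) are the points of U_1,
   inr (k, j) (k < d, j < r-1) are the points of U_(k+2). *)
Definition ptidx (r d : nat) : finType := ('I_r + ('I_d * 'I_r.-1))%type.

(* cluster of an index: which vertex (0-based) it is close to *)
Definition cluster (r d : nat) (t : ptidx r d) : 'I_d.+1 :=
  match t with inl _ => ord0 | inr (k, _) => lift ord0 k end.

Definition Midx (r d : nat) : {set ptidx r d} :=
  [set t : ptidx r d | if t is inl _ then true else false].

(* Main.v *)
Require Import Defs.
From HB Require Import structures.
From mathcomp Require Import all_boot all_order all_algebra.
From mathcomp Require Import ring lra.
Import Order.TTheory GRing.Theory Num.Theory.
Local Open Scope ring_scope.

Definition dotv {R : numDomainType} {d : nat} (u w : 'rV[R]_d) : R :=
  \sum_(k < d) u ord0 k * w ord0 k.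

Lemma dotDl {R : numDomainType} {d} (u u' w : 'rV[R]_d) :
  dotv (u + u') w = dotv u w + dotv u' w.
Proof. rewrite /dotv -big_split /=; apply: eq_bigr => k _; by rewrite mxE mulrDl. Qed.

Lemma dotZl {R : numDomainType} {d} (a : R) (u w : 'rV[R]_d) :
  dotv (a *: u) w = a * dotv u w.
Proof. rewrite /dotv mulr_sumr; apply: eq_bigr => k _; by rewrite mxE mulrA. Qed.

Lemma dotNl {R : numDomainType} {d} (u w : 'rV[R]_d) : dotv (- u) w = - dotv u w.
Proof. by rewrite -scaleN1r dotZl mulN1r. Qed.

Lemma dotBl {R : numDomainType} {d} (u u' w : 'rV[R]_d) :
  dotv (u - u') w = dotv u w - dotv u' w.
Proof. by rewrite dotDl dotNl. Qed.

Lemma dotC {R : numDomainType} {d} (u w : 'rV[R]_d) : dotv u w = dotv w u.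
Proof. by rewrite /dotv; apply: eq_bigr => k _; rewrite mulrC. Qed.

Lemma dot0l {R : numDomainType} {d} (w : 'rV[R]_d) : dotv 0 w = 0.
Proof. by rewrite -(scale0r (0 : 'rV[R]_d)) dotZl mul0r. Qed.

Lemma dot_suml {R : numDomainType} {d} {I : finType} (P : pred I)
  (f : I -> 'rV[R]_d) w :
  dotv (\sum_(i | P i) f i) w = \sum_(i | P i) dotv (f i) w.
Proof.
rewrite /dotv; under eq_bigr => k _ do rewrite summxE mulr_suml.
exact: exchange_big.
Qed.

Lemma dot_sumr {R : numDomainType} {d} {I : finType} (P : pred I)
  (f : I -> 'rV[R]_d) u :
  dotv u (\sum_(i | P i) f i) = \sum_(i | P i) dotv u (f i).
Proof. rewrite dotC dot_suml; apply: eq_bigr => i _; exact: dotC. Qed.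

Lemma sqnorm_lin {R : numDomainType} {d} (c : R) (u w : 'rV[R]_d) :
  sqnorm (u + c *: w) = sqnorm u + 2 * c * dotv u w + c ^+ 2 * sqnorm w.
Proof.
rewrite /sqnorm /dotv !mulr_sumr -!big_split /=; apply: eq_bigr => k _.
rewrite !mxE; ring.
Qed.

Lemma sqnorm_ge0 {R : realDomainType} {d} (u : 'rV[R]_d) : 0 <= sqnorm u.
Proof. by apply: sumr_ge0 => k _; exact: sqr_ge0. Qed.

Lemma dot_bound {R : realFieldType} {d} (e : R) (u w : 'rV[R]_d) :
  0 < e -> sqnorm u <= e ^+ 2 -> `|dotv u w| <= e * (1 + sqnorm w) / 2.
Proof.
move=> e0 hu.
have h1 := sqnorm_ge0 (u + (- e) *: w).
have h2 := sqnorm_ge0 (u + e *: w).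
rewrite sqnorm_lin in h1; rewrite sqnorm_lin in h2.
have hw := sqnorm_ge0 w.
rewrite ler_norml; apply/andP; split.
- rewrite -(ler_pM2l e0); nra.
- rewrite -(ler_pM2l e0); nra.
Qed.

Lemma dot_aff {R : numDomainType} {d} {I : finType} (B : {set I}) (al : I -> R)
  (p : I -> 'rV[R]_d) (v0 w : 'rV[R]_d) :
  \sum_(t in B) al t = 1 ->
  dotv ((\sum_(t in B) al t *: p t) - v0) w = \sum_(t in B) al t * dotv (p t - v0) w.
Proof.
move=> h1.
have -> : (\sum_(t in B) al t *: p t) - v0 = \sum_(t in B) al t *: (p t - v0).
  rewrite [RHS](eq_bigr (fun t => al t *: p t - al t *: v0)); last by move=> t _; rewrite scalerBr.
  by rewrite sumrB -scaler_suml h1 scale1r.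
rewrite dot_suml; apply: eq_bigr => t _; by rewrite dotZl.
Qed.

Lemma sqnorm0 {R : numDomainType} {d} : sqnorm (0 : 'rV[R]_d) = 0.
Proof. by rewrite /sqnorm big1 // => i _; rewrite mxE expr0n. Qed.

Theorem mainTheorem8 (R : archiRealFieldType) (r d : nat) (hr : (2 <= r)%N) (hd : (2 <= d)%N)
  (v : 'I_d.+1 -> 'rV[R]_d) (hv : regular_simplex v) :
  exists eps0 : R, 0 < eps0 /\
  forall eps : R, 0 < eps -> eps < eps0 ->
  forall pt : ptidx r d -> 'rV[R]_d,
    (forall t, sqnorm (pt t - v (cluster t)) <= eps ^+ 2) ->
    alg_indep (fun tk : ptidx r d * 'I_d => pt tk.1 ord0 tk.2) ->
    [/\ ~ (exists y, in_conv (Midx r d) pt y /\ in_conv (~: Midx r d) pt y),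
        size (undup [seq pt t | t <- enum (Midx r d)]) = r &
        ~ (exists (P : {set {set ptidx r d}}) (z : 'rV[R]_d) (alpha : ptidx r d -> R),
             [/\ proper_partition r d P,
                 (forall B, B \in P ->
                    z = \sum_(t in B) alpha t *: pt t /\ \sum_(t in B) alpha t = 1) &
                 (forall t, if t \in Midx r d then alpha t < 0 else 0 < alpha t)])].
Proof.
case: hv => s [s0 hs].
have d0 : (0 < d)%N by apply: leq_trans hd.
have sn0 : s != 0 by rewrite gt_eqF.
have dn0 : d%:R + 1 != 0 :> R by rewrite -[1]/(1%:R) -natrD pnatr_eq0 addn1.
pose v0 := v ord0.
pose e (k : 'I_d) := v (lift ord0 k) - v0.
pose cS : R := 2 / (s * (d%:R + 1)).
pose wS := cS *: \sum_k e k.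
pose wk (k : 'I_d) := (2 / s) *: e k - wS.
pose Sf (x : 'rV[R]_d) := dotv (x - v0) wS.
pose mu k (x : 'rV[R]_d) := dotv (x - v0) (wk k).
have pol (a b : 'rV[R]_d) : dotv a b = (sqnorm a + sqnorm b - sqnorm (a - b)) / 2.
  have := sqnorm_lin (-1) a b; rewrite scaleN1r => ->.
  by field.
have hG j k : dotv (e j) (e k) = if k == j then s else s / 2.
  rewrite pol.
  have -> : e j - e k = v (lift ord0 j) - v (lift ord0 k).
    by rewrite /e opprB addrA subrK.
  rewrite /e (hs (lift ord0 j) ord0) ?neq_lift // (hs (lift ord0 k) ord0) ?neq_lift //.
  case: (eqVneq k j) => [->|hkj].
    by rewrite subrr sqnorm0; field.
  rewrite hs; first by field.
  by apply: contra hkj => /eqP /lift_inj ->.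
have hSv0 : Sf v0 = 0 by rewrite /Sf subrr dot0l.
have hSv j : Sf (v (lift ord0 j)) = 1.
  rewrite /Sf /wS dotC dotZl dot_suml.
  under eq_bigr => k _ do rewrite dotC -/(e j) hG.
  rewrite (eq_bigr (fun k => s / 2 + (if k == j then s / 2 else 0))); last first.
    by move=> k _; case: (k == j); [field | rewrite addr0].
  rewrite big_split /= sumr_const card_ord -big_mkcond big_pred1_eq -mulr_natl /cS.
  by field; rewrite dn0 sn0.
have hmuE k x : mu k x = 2 / s * dotv (x - v0) (e k) - Sf x.
  by rewrite /mu /wk dotC dotBl dotZl dotC [dotv wS _]dotC.
have hmu0 k c : c != lift ord0 k -> mu k (v c) = 0.
  case: (unliftP ord0 c) => [j ->|->] hc; last by rewrite hmuE subrr dot0l hSv0; ring.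
  rewrite hmuE hSv -/(e j) hG ifF; first by field.
  by apply: contraNF hc => /eqP ->.
have hsum x : \sum_k mu k x = Sf x.
  under eq_bigr => k _ do rewrite hmuE.
  rewrite sumrB -mulr_sumr sumr_const card_ord.
  have -> : Sf x = cS * \sum_k dotv (x - v0) (e k) by rewrite /Sf /wS dotC dotZl dot_suml; congr (_ * _); apply: eq_bigr => k _; rewrite dotC.
  rewrite -mulr_natl /cS; by field; rewrite dn0 sn0.

pose K : R := 1 + (1 + sqnorm wS) / 2 + \sum_k (1 + sqnorm (wk k)) / 2.
have hq (w : 'rV[R]_d) : 0 <= (1 + sqnorm w) / 2 :> R.
  by apply: divr_ge0 => //; apply: addr_ge0 => //; exact: sqnorm_ge0.
have hsK : 0 <= \sum_k (1 + sqnorm (wk k)) / 2 :> R by apply: sumr_ge0 => k _.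
have hK0 : 0 < K.
  by have := hq wS; rewrite /K; lra.
have hKS : (1 + sqnorm wS) / 2 <= K by rewrite /K -addrA; have := hq wS; lra.
have hKk k : (1 + sqnorm (wk k)) / 2 <= K.
  rewrite /K (bigD1 k) //=.
  have : 0 <= \sum_(i | i != k) (1 + sqnorm (wk i)) / 2 :> R by apply: sumr_ge0 => i _.
  have := hq wS; lra.
have hdR : 2 <= d%:R :> R by rewrite ler_nat.
exists (1 / (16 * d%:R * K)); split.
  by apply: divr_gt0 => //; apply: mulr_gt0 => //; apply: mulr_gt0 => //; lra.
move=> eps e0 ee pt hpt hind.
have h16 : 0 < 16 * d%:R * K by apply: mulr_gt0 => //; apply: mulr_gt0 => //; lra.
rewrite ltr_pdivlMr // in ee.
pose eta := eps * K.
have heta0 : 0 < eta by apply: mulr_gt0.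
have heta1 : 16 * d%:R * eta < 1.
  have -> : 16 * d%:R * eta = eps * (16 * d%:R * K) by rewrite /eta; ring.
  done.
have heta2 : eta <= 1 / 32.
  have : 16 * 2 * eta <= 16 * d%:R * eta.
    by rewrite ler_pM2r // ler_pM2l //; lra.
  lra.
have hdiff (w x y : 'rV[R]_d) : dotv (x - v0) w - dotv (y - v0) w = dotv (x - y) w.
  by rewrite -dotBl opprB addrA subrK.
have hS t : `|Sf (pt t) - Sf (v (cluster t))| <= eta.
  rewrite /Sf hdiff; apply: (le_trans (@dot_bound _ _ eps _ wS e0 (hpt t))).
  by rewrite -mulrA; apply: ler_wpM2l => //; exact: ltW.
have hmuL k t : `|mu k (pt t) - mu k (v (cluster t))| <= eta.
  rewrite /mu hdiff; apply: (le_trans (@dot_bound _ _ eps _ (wk k) e0 (hpt t))).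
  by rewrite -mulrA; apply: ler_wpM2l => //; exact: ltW.
have hSc t : Sf (v (cluster t)) = if t \in Midx r d then 0 else 1.
  by case: t => [i|[k j]]; rewrite inE /=; [exact: hSv0 | exact: hSv].
have hSM t : t \in Midx r d -> Sf (pt t) <= eta.
  move=> ht; have := hS t; rewrite hSc ht subr0 ler_norml => /andP[_ ->] //.
have hSN t : t \notin Midx r d -> 1 - eta <= Sf (pt t).
  move=> ht; have := hS t; rewrite hSc (negbTE ht) ler_norml => /andP[h _]; lra.
split.
- move=> [y [[l1 [l1p [l1s hy1]]] [l2 [l2p [l2s hy2]]]]].
  have h1 : Sf y <= eta.
    rewrite /Sf hy1 dot_aff //.
    apply: (le_trans (y := \sum_(t in Midx r d) l1 t * eta)).
      apply: ler_sum => t ht; apply: ler_wpM2l; first exact: l1p.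
      exact: hSM.
    by rewrite -mulr_suml l1s mul1r.
  have h2 : 1 - eta <= Sf y.
    rewrite /Sf hy2 dot_aff //.
    apply: (le_trans (y := \sum_(t in ~: Midx r d) l2 t * (1 - eta))).
      by rewrite -mulr_suml l2s mul1r.
    apply: ler_sum => t ht; apply: ler_wpM2l; first exact: l2p.
    by apply: hSN; rewrite inE in ht.
  lra.
- have hinl (i j : 'I_r) : pt (inl i) = pt (inl j) -> i = j.
    move=> heq; apply/eqP; apply/negPn/negP => hij.
    pose k0 : 'I_d := Ordinal d0.
    pose a : ptidx r d * 'I_d := (inl i, k0).
    pose b : ptidx r d * 'I_d := (inl j, k0).
    have hab : a != b by apply: contra hij => /eqP [->].
    pose one : 'I_2 := ord_max.
    pose ea : {ffun ptidx r d * 'I_d -> 'I_2} := [ffun x => if x == a then one else ord0].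
    pose eb : {ffun ptidx r d * 'I_d -> 'I_2} := [ffun x => if x == b then one else ord0].
    have heab : eb != ea.
      apply/eqP => h; have := congr1 (fun f : {ffun ptidx r d * 'I_d -> 'I_2} => f a) h.
      by rewrite !ffunE eqxx (negbTE hab) => /(congr1 val).
    pose coef (f : {ffun ptidx r d * 'I_d -> 'I_2}) : rat :=
      if f == ea then 1 else if f == eb then -1 else 0.
    have hprod (f : {ffun ptidx r d * 'I_d -> 'I_2}) c0 :
        (forall x, f x = if x == c0 then one else ord0) ->
        \prod_x (pt x.1 ord0 x.2) ^+ f x = pt c0.1 ord0 c0.2.
      move=> hf; rewrite (bigD1 c0) //= hf eqxx /= expr1 big1 ?mulr1 // => x hx.
      by rewrite hf (negbTE hx) expr0.
    suff hc : coef ea = 0 by move: hc; rewrite /coef eqxx => /eqP; rewrite oner_eq0.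
    apply: (hind 2 coef) => /=.
    rewrite (bigD1 ea) //= (bigD1 eb) //= [X in _ + (_ + X)]big1; last first.
      move=> f /andP [h1 h2]. by rewrite /coef (negbTE h1) (negbTE h2) rmorph0 mul0r.
    rewrite /coef eqxx (negbTE heab) eqxx rmorph1 rmorphN1 addr0.
    rewrite (hprod ea a) ?(hprod eb b); try by move=> x; rewrite ffunE.
    by rewrite /a /b /= heq mul1r mulN1r subrr.
  have hcardM : #|Midx r d| = r.
    have -> : Midx r d = inl @: [set: 'I_r].
      apply/setP => -[i|x]; rewrite inE /=.
        by apply/esym; apply: imset_f; rewrite inE.
      by apply/esym/imsetP => -[i _].
    rewrite card_imset ?cardsT ?card_ord //.
    by move=> x y [].
  rewrite undup_id; first by rewrite size_map -cardE hcardM.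
  rewrite map_inj_in_uniq ?enum_uniq // => t1 t2.
  rewrite !mem_enum !inE.
  case: t1 => [i|x] //; case: t2 => [j|y] // _ _ /hinl -> //.
- move=> [P [z [al [[hpart [hcard hsz]] hB hsign]]]].
  case/and3P: hpart => _ htriv _.
  pose Apos (B : {set ptidx r d}) := \sum_(t in B) (if t \in Midx r d then 0 else al t).
  pose T (B : {set ptidx r d}) := \sum_(t in B) `|al t|.
  have hpB B : B \in P -> [/\ 1 <= Apos B, Apos B - eta * T B <= Sf z,
      T B = 2 * Apos B - 1 &
      forall k, (forall t, t \in B -> cluster t != lift ord0 k) -> mu k z <= eta * T B].
    move=> hBP; have [hz h1] := hB B hBP.
    split.
    - rewrite -h1 /Apos; apply: ler_sum => t _; have := hsign t.
      by case: (t \in Midx r d) => h; lra.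
    - rewrite /Sf hz dot_aff // /T mulr_sumr /Apos -sumrB; apply: ler_sum => t _.
      change (dotv (pt t - v0) wS) with (Sf (pt t)).
      have := hsign t; have := hS t; rewrite hSc.
      case: (t \in Midx r d) => hh ha; rewrite ler_norml in hh; case/andP: hh => hl hu.
        rewrite ltr0_norm //; nra.
      rewrite gtr0_norm //; nra.
    - have -> : T B = \sum_(t in B) (2 * (if t \in Midx r d then 0 else al t) - al t).
        apply: eq_bigr => t _; have := hsign t; case: (t \in Midx r d) => h.
          by rewrite ltr0_norm //; ring.
        by rewrite gtr0_norm //; ring.
      by rewrite sumrB -mulr_sumr h1.
    - move=> k hk; rewrite /mu hz dot_aff // /T mulr_sumr; apply: ler_sum => t ht.
      change (dotv (pt t - v0) (wk k)) with (mu k (pt t)).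
      have := hmuL k t; rewrite hmu0 ?hk // subr0 => hm.
      apply: (le_trans (ler_norm _)); rewrite normrM [eta * _]mulrC.
      by apply: ler_wpM2l.
  have hmiss k : exists2 B, B \in P & forall t, t \in B -> cluster t != lift ord0 k.
    have hns : ~~ (P \subset [set pblock P (inr (k, j)) | j : 'I_r.-1]).
      apply/negP => /subset_leq_card; rewrite hcard => hle.
      have := leq_trans hle (leq_imset_card _ _); rewrite card_ord => h.
      have hlt : (r.-1 < r)%N by rewrite ltn_predL (leq_trans _ hr).
      by move: hlt; rewrite ltnNge h.
    case/subsetPn: hns => B hBP hBn; exists B => // -[i|[k' j]] /= htB.
      by [].
    apply: contra hBn => /eqP /lift_inj hk'; subst k'.
    by apply/imsetP; exists j => //; rewrite (def_pblock htriv hBP htB).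
  have [B0 hB0 _] := hmiss (Ordinal d0).
  have [hA0 hS0 hT0 _] := hpB B0 hB0.
  have hpos : 1 - eta <= Sf z.
    have : 0 <= (Apos B0 - 1) * (1 - 2 * eta) by apply: mulr_ge0; lra.
    rewrite hT0 in hS0; nra.
  have hbound k : mu k z <= 4 * eta * Sf z.
    have [B hBP hk] := hmiss k; have [hA hSz hT hmu] := hpB B hBP.
    apply: (le_trans (hmu k hk)); rewrite hT.
    have h2 : 2 * Apos B - 1 <= 4 * Sf z.
      have : 0 <= Apos B * (1 / 32 - eta) by apply: mulr_ge0; lra.
      rewrite hT in hSz; nra.
    have := ler_wpM2l (ltW heta0) h2; lra.
  have : Sf z <= d%:R * (4 * eta * Sf z).
    have hsm : \sum_(k < d) mu k z <= \sum_(k < d) (4 * eta * Sf z).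
      by apply: ler_sum => k _; exact: hbound.
    by rewrite hsum sumr_const cardT size_enum_ord in hsm; rewrite mulr_natl.
  have : 0 < Sf z * (1 - 4 * d%:R * eta) by apply: mulr_gt0; lra.
  lra.
Qed.
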